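(* In the setting of the context, there exist elements $w_{ki}\in\overline{M'}$ ($1\le k\le r$, $2\le i\le n_k$) such that (1) $\langle w_{ki},\tilde e_{k1}\rangle=-1$ and $\langle w_{ki},\tilde e_{ki}\rangle=1$; (2) $\langle w_{ki},\tilde e_{lj}\rangle=0$ for all $\tilde e_{lj}\ne\tilde e_{k1},\tilde e_{ki}$; (3) $\langle w_{ki},e_{lj}\rangle=0$ for all $e_{lj}$. Moreover, for any elements $w_{ki}$ satisfying (1)–(3), $$\operatorname{Ann}(e)'=\operatorname{Ann}(e,\tilde e)\oplus\bigoplus_{k=1}^r\bigoplus_{i=2}^{n_k}\mathbb{Z}w_{ki}.$$
   Context: $M\cong\mathbb{Z}^d$, $N$ dual. $\{\Delta_1,\dots,\Delta_s\}$ is a nef-partition (lattice polytopes in $M_\mathbb{R}$ containing $0$ with reflexive Minkowski sum) of the $d$-dimensional reflexive polytope $\operatorname{Conv}(\cup\Delta_i)$, with dual nef-partition $\nabla_j=\{y:\langle x,y\rangle\ge-\delta_{ij}\ \forall x\in\Delta_i,\forall i\}$. $\overline M=\mathbb{Z}^s\oplus M$, $\overline N=\mathbb{Z}^s\oplus N$ with natural pairing; $K=\{(a;x):a_i\ge0,x\in\sum a_i\Delta_i\}$, $K^\vee$ its dual cone; $e_i=(\epsilon_i;0)$ ($\epsilon_i$ standard basis vectors of $\mathbb{Z}^s$), $\deg^\vee=\sum e_i$. Let $\tilde e_i=(\epsilon_i;p_i)\in K^\vee\cap\overline N$ with $p_i\in N\cap\nabla_i$ and $\sum_i\tilde e_i=\deg^\vee$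 (so $\sum p_i=0$). Let $r=s-\dim\operatorname{Span}_\mathbb{R}\{p_i\}$ and let $\{1,\dots,s\}=I_1\sqcup\dots\sqcup I_r$ with $I_k$ nonempty, $\sum_{i\in I_k}p_i=0$. Write $n_k=\#I_k$, $I_k=\{k1,\dots,kn_k\}$ and index $e_{ki},\tilde e_{ki},p_{ki}$ accordingly; $\{p_{ki}:2\le i\le n_k,1\le k\le r\}$ is $\mathbb{R}$-linearly independent. Choose $\xi_1,\dots,\xi_{d+r-s}\in N$ whose images form a basis of the free part of $N/\sum_{k,i}\mathbb{Z}p_{ki}$, set $N'=\operatorname{Span}_\mathbb{Z}(\{p_{ki}:i\ge2\}\cup\{\xi_j\})$, $M'=\operatorname{Hom}(N',\mathbb{Z})\supset M$, $\overline{M'}=\mathbb{Z}^s\oplus M'$ (dual to $\mathbb{Z}^s\oplus N'$, which contains all $e_i,\tilde e_i$). $\operatorname{Ann}(e)'=\{m\in\overline{M'}:\langle m,e_i\rangle=0\ \forall i\}$ and $\operatorname{Ann}(e,\tilde e)=\{m\in\overline{M'}:\langle m,e_i\rangle=\langle m,\tilde e_j\rangle=0\ \forall i,j\}$ (which equals the corresponding sublattice of $\overline M$). *)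

(* Defs.v *)
From HB Require Import structures.
From mathcomp Require Import all_boot all_order all_algebra reals.
Set Implicit Arguments.
Unset Strict Implicit.
Unset Printing Implicit Defensive.
Import Order.TTheory GRing.Theory Num.Theory.
Local Open Scope ring_scope.

(* M = Z^d, N = Z^d, points of M, N are integer row vectors 'rV[int]_d. *)

Definition ipt (R : realType) (d : nat) (v : 'rV[int]_d) : 'rV[R]_d :=
  map_mx (fun z : int => z%:~R) v.

Definition pairR (R : realType) (d : nat) (x y : 'rV[R]_d) : R :=
  \sum_(j < d) x 0 j * y 0 j.

Definition conv_hull (R : realType) (d : nat) (P : 'rV[R]_d -> Prop)
  (x : 'rV[R]_d) : Prop :=
  exists (n : nat) (y : 'I_n -> 'rV[R]_d) (c : 'I_n -> R),
    [/\ forall j, P (y j), forall j, 0 <= c j, \sum_j c j = 1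
      & x = \sum_j c j *: y j].

Definition lat_poly (R : realType) (d : nat) (S : seq 'rV[int]_d)
  (x : 'rV[R]_d) : Prop :=
  conv_hull (fun z => exists2 v, v \in S & z = ipt R v) x.

Definition Delta (R : realType) (d s : nat) (V : 'I_s -> seq 'rV[int]_d)
  (i : 'I_s) (x : 'rV[R]_d) : Prop := lat_poly (V i) x.

Definition msum (R : realType) (d s : nat) (V : 'I_s -> seq 'rV[int]_d)
  (x : 'rV[R]_d) : Prop :=
  exists y : 'I_s -> 'rV[R]_d, (forall i, Delta V i (y i)) /\ x = \sum_i y i.

Definition conv_union (R : realType) (d s : nat) (V : 'I_s -> seq 'rV[int]_d)
  (x : 'rV[R]_d) : Prop :=
  conv_hull (fun z => exists i, Delta V i z) x.

Definition reflexive (R : realType) (d : nat) (P : 'rV[R]_d -> Prop) : Prop :=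
  [/\ exists S : seq 'rV[int]_d, forall x, P x <-> lat_poly S x,
      exists2 eps : R, 0 < eps &
        forall x : 'rV[R]_d, (forall j, `|x 0 j| < eps) -> P x
    & exists T : seq 'rV[int]_d, forall y : 'rV[R]_d,
        (forall x, P x -> - 1 <= pairR x y) <-> lat_poly T y].

Definition nef_partition (R : realType) (d s : nat)
  (V : 'I_s -> seq 'rV[int]_d) : Prop :=
  [/\ forall i, Delta V i (0 : 'rV[R]_d),
      reflexive (msum (R := R) V)
    & reflexive (conv_union (R := R) V)].

Definition in_nabla (R : realType) (d s : nat) (V : 'I_s -> seq 'rV[int]_d)
  (j : 'I_s) (y : 'rV[R]_d) : Prop :=
  forall (i : 'I_s) (x : 'rV[R]_d), Delta V i x -> - (i == j)%:R <= pairR x y.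

(* the cone K in Mbar_R = R^s (+) M_R *)
Definition inK (R : realType) (d s : nat) (V : 'I_s -> seq 'rV[int]_d)
  (a : 'I_s -> R) (x : 'rV[R]_d) : Prop :=
  (forall i, 0 <= a i) /\
  exists y : 'I_s -> 'rV[R]_d,
    (forall i, exists2 z, Delta V i z & y i = a i *: z) /\ x = \sum_i y i.

Definition inKdual (R : realType) (d s : nat) (V : 'I_s -> seq 'rV[int]_d)
  (b : 'I_s -> R) (y : 'rV[R]_d) : Prop :=
  forall (a : 'I_s -> R) (x : 'rV[R]_d), inK V a x ->
    0 <= \sum_i a i * b i + pairR x y.

Definition pairQ (d : nat) (m : 'rV[rat]_d) (y : 'rV[int]_d) : rat :=
  \sum_(j < d) m 0 j * (y 0 j)%:~R.

(* i is not the distinguished first element k1 of its block I_k *)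
Definition nonrep (s r : nat) (blk : 'I_s -> 'I_r) (rep : 'I_r -> 'I_s)
  (i : 'I_s) : bool := rep (blk i) != i.

Definition sat (d s : nat) (p : 'I_s -> 'rV[int]_d) (n : 'rV[int]_d) : Prop :=
  exists (t : nat) (c : 'I_s -> int), (0 < t)%N /\ n *~ t%:Z = \sum_i p i *~ c i.

(* the images of xi form a basis of the free part (N / sum Z p_i) / torsion *)
Definition free_part_basis (d s t : nat) (p : 'I_s -> 'rV[int]_d)
  (xi : 'I_t -> 'rV[int]_d) : Prop :=
  (forall n : 'rV[int]_d, exists c : 'I_t -> int,
      sat p (n - \sum_j xi j *~ c j)) /\
  (forall c : 'I_t -> int, sat p (\sum_j xi j *~ c j) -> forall j, c j = 0).

Definition inN' (d s r t : nat) (p : 'I_s -> 'rV[int]_d) (blk : 'I_s -> 'I_r)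
  (rep : 'I_r -> 'I_s) (xi : 'I_t -> 'rV[int]_d) (n : 'rV[int]_d) : Prop :=
  exists (c : 'I_s -> int) (c' : 'I_t -> int),
    (forall i, ~~ nonrep blk rep i -> c i = 0) /\
    n = \sum_i p i *~ c i + \sum_j xi j *~ c' j.

(* M' = Hom(N', Z), realised inside M_Q as {m : <m, n> in Z for all n in N'} *)
Definition inM' (d s r t : nat) (p : 'I_s -> 'rV[int]_d) (blk : 'I_s -> 'I_r)
  (rep : 'I_r -> 'I_s) (xi : 'I_t -> 'rV[int]_d) (m : 'rV[rat]_d) : Prop :=
  forall n, inN' p blk rep xi n -> exists z : int, pairQ m n = z%:~R.

(* elements (a ; m) of Mbar'_Q with a in Z^s; they lie in Mbar' iff inM' m *)
Definition mbar (s d : nat) := ('rV[int]_s * 'rV[rat]_d)%type.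

Definition pair_e (s d : nat) (v : mbar s d) (i : 'I_s) : rat := (v.1 0 i)%:~R.

(* <(a;m), e~_i> with e~_i = (eps_i ; p_i) *)
Definition pair_et (s d : nat) (p : 'I_s -> 'rV[int]_d) (v : mbar s d)
  (i : 'I_s) : rat := (v.1 0 i)%:~R + pairQ v.2 (p i).

Definition Ann_e' (d s r t : nat) (p : 'I_s -> 'rV[int]_d) (blk : 'I_s -> 'I_r)
  (rep : 'I_r -> 'I_s) (xi : 'I_t -> 'rV[int]_d) (v : mbar s d) : Prop :=
  inM' p blk rep xi v.2 /\ forall i, pair_e v i = 0.

Definition Ann_eet (d s r t : nat) (p : 'I_s -> 'rV[int]_d) (blk : 'I_s -> 'I_r)
  (rep : 'I_r -> 'I_s) (xi : 'I_t -> 'rV[int]_d) (v : mbar s d) : Prop :=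
  [/\ inM' p blk rep xi v.2, forall i, pair_e v i = 0
    & forall j, pair_et p v j = 0].

(* conditions (1)-(3) on w_ki (i nonrep in block k = blk i, k1 = rep k),
   together with w_ki in Mbar' *)
Definition w_conds (d s r t : nat) (p : 'I_s -> 'rV[int]_d) (blk : 'I_s -> 'I_r)
  (rep : 'I_r -> 'I_s) (xi : 'I_t -> 'rV[int]_d) (w : 'I_s -> mbar s d) : Prop :=
  forall i, nonrep blk rep i ->
    [/\ inM' p blk rep xi (w i).2,
        pair_et p (w i) (rep (blk i)) = -1 /\ pair_et p (w i) i = 1,
        (forall j, j != rep (blk i) -> j != i -> pair_et p (w i) j = 0)
      & forall j, pair_e (w i) j = 0].

Definition direct_decomp (d s r t : nat) (p : 'I_s -> 'rV[int]_d)
  (blk : 'I_s -> 'I_r) (rep : 'I_r -> 'I_s) (xi : 'I_t -> 'rV[int]_d)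
  (w : 'I_s -> mbar s d) : Prop :=
  (forall v : mbar s d, Ann_e' p blk rep xi v <->
     exists u c, Ann_eet p blk rep xi u /\
       v = u + \sum_(i | nonrep blk rep i) w i *~ c i) /\
  (forall (u u' : mbar s d) (c c' : 'I_s -> int),
     Ann_eet p blk rep xi u -> Ann_eet p blk rep xi u' ->
     u + \sum_(i | nonrep blk rep i) w i *~ c i =
     u' + \sum_(i | nonrep blk rep i) w i *~ c' i ->
     u = u' /\ forall i, nonrep blk rep i -> c i = c' i).

(* Main.v *)
Require Import Defs.
From HB Require Import structures.
From mathcomp Require Import all_boot all_order all_algebra reals.
Import Order.TTheory GRing.Theory Num.Theory.
Local Open Scope ring_scope.


Lemma mzEg (R : pzRingType) m n (A : 'M[R]_(m,n)) c i j : (A *~ c) i j = A i j *~ c.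
Proof. by rewrite -scaler_int mxE mulrzl. Qed.

Lemma mzE n (A : 'rV[int]_n) c j : (A *~ c) 0 j = A 0 j * c.
Proof. by rewrite mzEg mulrzz. Qed.

Lemma pairQD1 d (m1 m2 : 'rV[rat]_d) y : pairQ (m1 + m2) y = pairQ m1 y + pairQ m2 y.
Proof. by rewrite /pairQ -big_split; apply: eq_bigr => j _; rewrite mxE mulrDl. Qed.

Lemma pairQ01 d (y : 'rV[int]_d) : pairQ 0 y = 0.
Proof. by rewrite /pairQ big1 // => j _; rewrite mxE mul0r. Qed.

Lemma pairQN1 d (m : 'rV[rat]_d) y : pairQ (- m) y = - pairQ m y.
Proof. by rewrite /pairQ -sumrN; apply: eq_bigr => j _; rewrite mxE mulNr. Qed.

Lemma pairQMz1 d (m : 'rV[rat]_d) y c : pairQ (m *~ c) y = pairQ m y *~ c.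
Proof.
rewrite /pairQ mulrz_suml; apply: eq_bigr => j _.
by rewrite mzEg mulrzAl.
Qed.

Lemma pairQD2 d (m : 'rV[rat]_d) y1 y2 : pairQ m (y1 + y2) = pairQ m y1 + pairQ m y2.
Proof. by rewrite /pairQ -big_split; apply: eq_bigr => j _; rewrite mxE intrD mulrDr. Qed.

Lemma pairQ02 d (m : 'rV[rat]_d) : pairQ m 0 = 0.
Proof. by rewrite /pairQ big1 // => j _; rewrite mxE mulr0. Qed.

Lemma pairQMz2 d (m : 'rV[rat]_d) y c : pairQ m (y *~ c) = pairQ m y *~ c.
Proof.
rewrite /pairQ mulrz_suml; apply: eq_bigr => j _.
by rewrite mzE intrM mulrA mulrzr.
Qed.

Lemma pairQ_sum1 d I r P (F : I -> 'rV[rat]_d) y :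
  pairQ (\sum_(i <- r | P i) F i) y = \sum_(i <- r | P i) pairQ (F i) y.
Proof.
apply: (big_rec2 (fun a b => pairQ b y = a)) => [|i a b _ <-]; first exact: pairQ01.
exact: pairQD1.
Qed.

Lemma pairQ_sum2 d I r P (F : I -> 'rV[int]_d) (m : 'rV[rat]_d) :
  pairQ m (\sum_(i <- r | P i) F i) = \sum_(i <- r | P i) pairQ m (F i).
Proof.
apply: (big_rec2 (fun a b => pairQ m b = a)) => [|i a b _ <-]; first exact: pairQ02.
exact: pairQD2.
Qed.

Lemma pair_etD s d p (v1 v2 : mbar s d) j :
  pair_et p (v1 + v2) j = pair_et p v1 j + pair_et p v2 j.
Proof.
rewrite /pair_et /= pairQD1 mxE intrD.
by rewrite addrACA.
Qed.

Lemma pair_et0 s d p j : pair_et p (0 : mbar s d) j = 0.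
Proof. by rewrite /pair_et /= pairQ01 mxE addr0. Qed.

Lemma pair_etMz s d p (v : mbar s d) c j : pair_et p (v *~ c) j = pair_et p v j *~ c.
Proof.
rewrite /pair_et (raddfMz fst) (raddfMz snd) pairQMz1 mzE intrM mulrzr.
by rewrite mulrzDl.
Qed.

Lemma pair_et_sum s d p I r P (F : I -> mbar s d) j :
  pair_et p (\sum_(i <- r | P i) F i) j = \sum_(i <- r | P i) pair_et p (F i) j.
Proof.
apply: (big_rec2 (fun a b => pair_et p b j = a)) => [|i a b _ <-]; first exact: pair_et0.
exact: pair_etD.
Qed.


Lemma inM'0 d s r t p blk rep xi : @inM' d s r t p blk rep xi 0.
Proof. by move=> n _; exists 0; rewrite pairQ01. Qed.

Lemma inM'D d s r t p blk rep xi m1 m2 :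
  @inM' d s r t p blk rep xi m1 -> inM' p blk rep xi m2 -> inM' p blk rep xi (m1 + m2).
Proof.
move=> h1 h2 n hn; have [z1 e1] := h1 n hn; have [z2 e2] := h2 n hn.
by exists (z1 + z2); rewrite pairQD1 e1 e2 intrD.
Qed.

Lemma inM'N d s r t p blk rep xi m :
  @inM' d s r t p blk rep xi m -> inM' p blk rep xi (- m).
Proof.
move=> h1 n hn; have [z1 e1] := h1 n hn.
by exists (- z1); rewrite pairQN1 e1 intrN.
Qed.

Lemma inM'Mz d s r t p blk rep xi m c :
  @inM' d s r t p blk rep xi m -> inM' p blk rep xi (m *~ c).
Proof.
move=> h1 n hn; have [z1 e1] := h1 n hn.
by exists (z1 * c); rewrite pairQMz1 e1 intrM mulrzr.
Qed.

Lemma inM'_sum d s r t p blk rep xi I rr (P : pred I) (F : I -> 'rV[rat]_d) :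
  (forall i, P i -> @inM' d s r t p blk rep xi (F i)) ->
  inM' p blk rep xi (\sum_(i <- rr | P i) F i).
Proof.
move=> h; apply: (big_ind (inM' p blk rep xi)); [exact: inM'0 | exact: inM'D | exact: h].
Qed.

Lemma pQ_rep d s r (p : 'I_s -> 'rV[int]_d) (blk : 'I_s -> 'I_r) rep m k :
  (forall k, blk (rep k) = k) ->
  (forall k, \sum_(i | blk i == k) p i = 0) ->
  pairQ m (p (rep k)) = - \sum_(i | nonrep blk rep i && (blk i == k)) pairQ m (p i).
Proof.
move=> Hrep Hb.
have := congr1 (pairQ m) (Hb k); rewrite pairQ_sum2 pairQ02 (bigD1 (rep k)) ?Hrep ?eqxx //=.
move/eqP; rewrite addr_eq0 => /eqP ->; congr (- _).
apply: eq_bigl => i; rewrite /nonrep.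
have [->|nk] := eqVneq (blk i) k; first by rewrite andbT eq_sym.
by rewrite andbF.
Qed.

Lemma nonrep_neq s r (blk : 'I_s -> 'I_r) rep i k :
  (forall k, blk (rep k) = k) -> nonrep blk rep i -> i != rep k.
Proof.
move=> Hrep; rewrite /nonrep; apply: contra => /eqP ->; by rewrite Hrep.
Qed.

Lemma rep_not_nonrep s r (blk : 'I_s -> 'I_r) rep k :
  (forall k, blk (rep k) = k) -> ~~ nonrep blk rep (rep k).
Proof. by move=> Hrep; rewrite /nonrep Hrep negbK. Qed.


Lemma pe0 s d (v : mbar s d) : (forall i, pair_e v i = 0) -> v.1 = 0.
Proof.
move=> h; apply/rowP => j; rewrite mxE; have := h j; rewrite /pair_e => /eqP.
by rewrite intr_eq0 => /eqP.
Qed.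

Lemma pair_etN s d p (v : mbar s d) j : pair_et p (- v) j = - pair_et p v j.
Proof. by rewrite -mulrN1z pair_etMz mulrN1z. Qed.

Lemma pair_etB s d p (v1 v2 : mbar s d) j :
  pair_et p (v1 - v2) j = pair_et p v1 j - pair_et p v2 j.
Proof. by rewrite pair_etD pair_etN. Qed.

Arguments nonrep_neq {s r blk rep i k}.
Section Decomp.
Variables (d s r t : nat) (p : 'I_s -> 'rV[int]_d) (blk : 'I_s -> 'I_r)
  (rep : 'I_r -> 'I_s) (xi : 'I_t -> 'rV[int]_d) (w : 'I_s -> mbar s d).
Hypothesis Hrep : forall k, blk (rep k) = k.
Hypothesis Hb : forall k, \sum_(i | blk i == k) p i = 0.
Hypothesis Hw : w_conds p blk rep xi w.

Lemma w_first i : nonrep blk rep i -> (w i).1 = 0.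
Proof. by move=> ni; case: (Hw _ ni) => _ _ _; apply: pe0. Qed.

Lemma pet_w i j : nonrep blk rep i ->
  pair_et p (w i) j = (j == i)%:R - (j == rep (blk i))%:R.
Proof.
move=> ni; case: (Hw _ ni) => _ [h1 h2] h3 _.
have [->|nji] := eqVneq j i.
  by rewrite h2 (negbTE (nonrep_neq Hrep ni)) subr0.
have [->|njr] := eqVneq j (rep (blk i)); first by rewrite h1 sub0r.
by rewrite h3 // subrr.
Qed.

Lemma pet_sum_nonrep (c : 'I_s -> int) j : nonrep blk rep j ->
  pair_et p (\sum_(i | nonrep blk rep i) w i *~ c i) j = (c j)%:~R.
Proof.
move=> nj; rewrite pair_et_sum (bigD1 j) //= big1 => [|i /andP [ni nij]].
  by rewrite pair_etMz pet_w // eqxx (negbTE (nonrep_neq Hrep nj)) subr0 addr0.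
by rewrite pair_etMz pet_w // eq_sym (negbTE nij) (negbTE (nonrep_neq Hrep nj)) subrr mul0rz.
Qed.

Lemma pet_sum_rep (c : 'I_s -> int) k :
  pair_et p (\sum_(i | nonrep blk rep i) w i *~ c i) (rep k) =
  - \sum_(i | nonrep blk rep i && (blk i == k)) (c i)%:~R.
Proof.
rewrite pair_et_sum big_mkcondr /= -sumrN; apply: eq_bigr => i ni.
rewrite pair_etMz pet_w // eq_sym (negbTE (nonrep_neq Hrep ni)) sub0r.
have -> : (rep k == rep (blk i)) = (blk i == k).
  apply/eqP/eqP => [e|->] //; by rewrite -[k]Hrep e Hrep.
by case: (blk i == k); rewrite ?mulNrz ?mul1rz ?oppr0 // mul0rz oppr0.
Qed.

Lemma decomp : direct_decomp p blk rep xi w.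
Proof.
split.
  move=> v; split.
    case=> hM he; have v10 := @pe0 _ _ _ he.
    have : forall i, exists z : int,
        nonrep blk rep i -> pairQ v.2 (p i) = z%:~R.
      move=> i; case ni: (nonrep blk rep i); last by exists 0.
      have hN : inN' p blk rep xi (p i).
        exists (fun j => (j == i)%:R), (fun _ => 0); split.
        - move=> j nj; case: eqP => // eji; by rewrite eji ni in nj.
        - rewrite [X in _ + X]big1 ?addr0 => [|l _]; last by rewrite mulr0z.
          rewrite (bigD1 i) //= eqxx mulr1z big1 ?addr0 // => j /negbTE ->.
          by rewrite mulr0z.
      have [z ez] := hM (p i) hN; by exists z.
    case/fin_all_exists => c hc.
    exists (v - \sum_(i | nonrep blk rep i) w i *~ c i), c; split; last by rewrite subrK.
    split.
    - rewrite (raddfB snd) /=; apply: inM'D => //; apply: inM'N.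
      rewrite (raddf_sum snd); apply: inM'_sum => i ni.
      by rewrite (raddfMz snd); apply: inM'Mz; case: (Hw _ ni).
    - move=> i; rewrite /pair_e (raddfB fst) (raddf_sum fst) /= v10 big1 ?subrr ?mxE //.
      by move=> j nj; rewrite (raddfMz fst) /= w_first // mul0rz.
    - move=> j; rewrite pair_etB.
      case nj: (nonrep blk rep j).
        by rewrite pet_sum_nonrep // /pair_et v10 mxE add0r hc // subrr.
      move: nj; rewrite /nonrep => /negbFE /eqP <-.
      rewrite pet_sum_rep /pair_et v10 mxE add0r. rewrite (@pQ_rep _ _ _ _ _ _ _ _ Hrep Hb) opprK.
      rewrite addrC; apply/eqP; rewrite subr_eq0; apply/eqP.
      by apply: eq_bigr => i /andP [ni _]; rewrite hc.
  case=> u [c [[hu1 hu2 hu3] ->]]; split.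
    rewrite (raddfD snd) /=; apply: inM'D => //.
    rewrite (raddf_sum snd); apply: inM'_sum => i ni.
    by rewrite (raddfMz snd); apply: inM'Mz; case: (Hw _ ni).
  move=> i; rewrite /pair_e (raddfD fst) (raddf_sum fst) /= (@pe0 _ _ _ hu2) big1 ?addr0 ?mxE //.
  by move=> j nj; rewrite (raddfMz fst) /= w_first // mul0rz.
move=> u u' c c' [_ _ hu] [_ _ hu'] e.
have ec : forall i, nonrep blk rep i -> c i = c' i.
  move=> i ni; have := congr1 (fun v => pair_et p v i) e => /=.
  rewrite !pair_etD hu hu' !add0r !pet_sum_nonrep //; exact: intr_inj.
split=> //; move: e; rewrite (eq_bigr (fun i => w i *~ c' i)); first exact: addIr.
by move=> i ni; rewrite ec.
Qed.

End Decomp.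


Lemma clear_den n (q : 'I_n -> rat) :
  exists D : nat, (0 < D)%N /\ forall i, exists z : int, q i * D%:R = z%:~R.
Proof.
exists (\prod_(i < n) `|denq (q i)|%N); split.
  by apply: prodn_gt0 => i; rewrite absz_gt0 denq_neq0.
move=> i; rewrite (bigD1 i) //= natrM mulrA natr_absz gtr0_norm ?denq_gt0 // -numqE.
by exists (numq (q i) * (\prod_(j | j != i) `|denq (q j)|%N)%:Z); rewrite intrM.
Qed.

Section Indep.
Variables (R : realType) (d s r t : nat) (p : 'I_s -> 'rV[int]_d) (blk : 'I_s -> 'I_r)
  (rep : 'I_r -> 'I_s) (xi : 'I_t -> 'rV[int]_d).
Hypothesis Hrep : forall k, blk (rep k) = k.
Hypothesis Hb : forall k, \sum_(i | blk i == k) p i = 0.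
Hypothesis HR : forall c : 'I_s -> R, (forall i, ~~ nonrep blk rep i -> c i = 0) ->
     \sum_i c i *: ipt R (p i) = 0 -> forall i, c i = 0.
Hypothesis Hfree : free_part_basis p xi.

Lemma indepQ (a : 'I_s -> rat) (b : 'I_t -> rat) :
  (forall i, ~~ nonrep blk rep i -> a i = 0) ->
  (forall j, \sum_i a i * (p i 0 j)%:~R + \sum_l b l * (xi l 0 j)%:~R = 0) ->
  (forall i, a i = 0) /\ (forall l, b l = 0).
Proof.
move=> ha hab.
have [Da [Da0 hDa]] := clear_den _ a; have [Db [Db0 hDb]] := clear_den _ b.
have [za hza] := fin_all_exists hDa; have [zb hzb] := fin_all_exists hDb.
have hD0 : ((Da * Db)%N%:R : rat) != 0 by rewrite pnatr_eq0 -lt0n muln_gt0 Da0.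
pose al i := za i * Db%:Z. pose be l := zb l * Da%:Z.
have hal : forall i, a i * (Da * Db)%N%:R = (al i)%:~R.
  by move=> i; rewrite /al intrM natrM mulrA hza.
have hbe : forall l, b l * (Da * Db)%N%:R = (be l)%:~R.
  by move=> l; rewrite /be intrM natrM mulrCA mulrC hzb.
have hint : forall j, \sum_i al i * p i 0 j + \sum_l be l * xi l 0 j = 0.
  move=> j; apply: (@intr_inj rat); rewrite intrD !rmorph_sum /= mulr0z.
  have := congr1 (fun x => x * ((Da * Db)%N%:R : rat)) (hab j).
  rewrite /= mul0r mulrDl !mulr_suml => e; rewrite -[RHS]e.
  congr (_ + _); apply: eq_bigr => i _; by rewrite intrM -?hal -?hbe mulrAC.
have hsat : sat p (\sum_l xi l *~ be l).
  exists 1%N, (fun i => - al i); split => //; rewrite mulr1z; apply/rowP => j.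
  rewrite !summxE (eq_bigr (fun l => be l * xi l 0 j)) => [|l _]; last by rewrite mzE mulrC.
  rewrite (eq_bigr (fun i => - (al i * p i 0 j))) => [|i _]; last by rewrite mzE mulrN mulrC.
  by rewrite sumrN; apply/eqP; rewrite -addr_eq0 addrC hint.
have hbe0 := Hfree.2 _ hsat.
have hal_int : forall j, \sum_i al i * p i 0 j = 0.
  move=> j; have := hint j; rewrite [X in _ + X]big1 ?addr0 // => l _; by rewrite hbe0 mul0r.
have hal_rep : forall i, ~~ nonrep blk rep i -> al i = 0.
  move=> i /ha ai0; apply: (@intr_inj rat); by rewrite -hal ai0 mul0r mulr0z.
have hal0 : forall i, al i = 0.
  have h1 : forall i, ~~ nonrep blk rep i -> ((al i)%:~R : R) = 0.
    by move=> i' /hal_rep ->; rewrite mulr0z.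
  have h2 : \sum_i ((al i)%:~R : R) *: ipt R (p i) = 0.
    apply/rowP => j; rewrite summxE !mxE.
    rewrite (eq_bigr (fun i => ((al i * p i 0 j)%:~R : R))) => [|i' _]; last by rewrite !mxE intrM.
    by rewrite -rmorph_sum hal_int rmorph0.
  move=> i; have := HR (fun i => (al i)%:~R) h1 h2 i; move/eqP; rewrite intr_eq0; exact/eqP.
split=> [i|l].
  have := hal i; rewrite hal0 mulr0z => /eqP; rewrite mulf_eq0 (negbTE hD0) orbF; exact/eqP.
have := hbe l; rewrite hbe0 mulr0z => /eqP; rewrite mulf_eq0 (negbTE hD0) orbF; exact/eqP.
Qed.


Lemma spanQ (k : 'I_d) : exists (a : 'I_s -> rat) (b : 'I_t -> rat),
  (forall i, ~~ nonrep blk rep i -> a i = 0) /\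
  forall j, \sum_i a i * (p i 0 j)%:~R + \sum_l b l * (xi l 0 j)%:~R = (k == j)%:R.
Proof.
have [c [T [g [T0 hT]]]] := Hfree.1 (\row_j ((k == j)%:R : int)).
have hTj : forall j, ((k == j)%:R - \sum_l xi l 0 j * c l) * T%:Z = \sum_i p i 0 j * g i.
  move=> j; have := congr1 (fun v : 'rV[int]_d => v 0 j) hT => /=.
  rewrite mzE !mxE !summxE (eq_bigr (fun l => xi l 0 j * c l)) => [|l _]; last by rewrite mzE.
  rewrite (eq_bigr (fun i => p i 0 j * g i) (P := xpredT) (r := index_enum _)) => [->|i _] //; by rewrite mzE.
have hblk : forall j, \sum_i p i 0 j * g (rep (blk i)) = 0.
  move=> j; rewrite (partition_big blk predT) //= big1 // => k' _.
  rewrite (eq_bigr (fun i => p i 0 j * g (rep k'))); last by move=> i /eqP ->.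
  rewrite -mulr_suml -summxE Hb mxE mul0r //.
have T0' : (T%:R : rat) != 0 by rewrite pnatr_eq0 -lt0n.
exists (fun i => (g i - g (rep (blk i)))%:~R / T%:R), (fun l => (c l)%:~R); split.
  by move=> i; rewrite /nonrep negbK => /eqP ->; rewrite subrr mul0r.
move=> j.
have ei : \sum_i (g i - g (rep (blk i))) * p i 0 j = ((k == j)%:R - \sum_l xi l 0 j * c l) * T%:Z.
  rewrite hTj (eq_bigr (fun i => p i 0 j * g i - p i 0 j * g (rep (blk i)))).
    by rewrite sumrB hblk subr0.
  by move=> i _; rewrite mulrC mulrBr.
have e := congr1 (fun z : int => (z%:~R : rat)) ei.
move: e; rewrite /= rmorph_sum intrM intrB rmorph_sum rmorph_nat /= => e.
rewrite (eq_bigr (fun i => ((g i - g (rep (blk i))) * p i 0 j)%:~R / T%:R)) => [|i _]; last first.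
  by rewrite intrM mulrAC.
rewrite -mulr_suml e mulfK //.
rewrite [X in _ + X](eq_bigr (fun l => ((xi l 0 j * c l)%:~R : rat))) => [|l _]; last by rewrite intrM mulrC.
by rewrite subrK.
Qed.

Lemma sum_deltal n (F : 'I_n -> rat) j : \sum_i (i == j)%:R * F i = F j.
Proof. by rewrite (bigD1 j) //= eqxx mul1r big1 ?addr0 // => i /negbTE ->; rewrite mul0r. Qed.

Lemma consQ (tau : 'I_s -> rat) : exists m : 'rV[rat]_d,
  (forall j, nonrep blk rep j -> pairQ m (p j) = tau j) /\ (forall l, pairQ m (xi l) = 0).
Proof.
have [A hA] := fin_all_exists spanQ; have [B hB] := fin_all_exists hA.
have key : forall (y : 'rV[int]_d) j,
  \sum_i (\sum_k A k i * (y 0 k)%:~R) * (p i 0 j)%:~R +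
  \sum_l (\sum_k B k l * (y 0 k)%:~R) * (xi l 0 j)%:~R = (y 0 j)%:~R.
  move=> y j.
  have -> : (y 0 j)%:~R = \sum_k (y 0 k)%:~R * ((k == j)%:R : rat).
    by rewrite (bigD1 j) //= eqxx mulr1 big1 ?addr0 // => i /negbTE ->; rewrite mulr0.
  under [RHS]eq_bigr => k _ do rewrite -(proj2 (hB k) j) mulrDr !mulr_sumr.
  rewrite big_split /= [in RHS]exchange_big [X in _ = _ + X]exchange_big /=.
  congr (_ + _); apply: eq_bigr => i _; rewrite mulr_suml; apply: eq_bigr => k _.
    by rewrite mulrCA mulrA.
  by rewrite mulrCA mulrA.
set m := \row_k \sum_i A k i * tau i.
have pm : forall y, pairQ m y = \sum_i tau i * (\sum_k A k i * (y 0 k)%:~R).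
  move=> y; rewrite /pairQ.
  under eq_bigr => k _ do rewrite mxE mulr_suml.
  rewrite exchange_big; apply: eq_bigr => i _; rewrite mulr_sumr; apply: eq_bigr => k _.
  by rewrite mulrAC mulrC.
have Arep : forall k i, ~~ nonrep blk rep i -> A k i = 0 by move=> k i /(proj1 (hB k)).
exists m; split.
  move=> j nj.
  have h1 : forall i, ~~ nonrep blk rep i ->
      (fun i => (\sum_k A k i * (p j 0 k)%:~R) - (i == j)%:R) i = 0.
    move=> i ni /=; rewrite big1 ?sub0r => [|k _]; last by rewrite Arep ?mul0r.
    have -> : (i == j) = false.
      by apply/negbTE; apply: contraNneq ni => ->.
    by rewrite oppr0.
  have h2 : forall j', \sum_i (fun i => (\sum_k A k i * (p j 0 k)%:~R) - (i == j)%:R) i * (p i 0 j')%:~R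
      + \sum_l (fun l => \sum_k B k l * (p j 0 k)%:~R) l * (xi l 0 j')%:~R = 0.
    move=> j' /=; rewrite (eq_bigr (fun i => (\sum_k A k i * (p j 0 k)%:~R) * (p i 0 j')%:~R
                 - (i == j)%:R * (p i 0 j')%:~R)) => [|i _]; last by rewrite mulrBl.
    by rewrite sumrB sum_deltal addrAC key subrr.
  have [h _] := indepQ _ _ h1 h2.
  rewrite pm (eq_bigr (fun i => tau i * (i == j)%:R)) => [|i _].
    by rewrite (eq_bigr (fun i => (i == j)%:R * tau i)) ?sum_deltal // => i _; rewrite mulrC.
  by have := h i; move/eqP; rewrite subr_eq0 => /eqP ->.
move=> l0.
have h1 : forall i, ~~ nonrep blk rep i ->
    (fun i => \sum_k A k i * (xi l0 0 k)%:~R) i = 0.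
  by move=> i ni; rewrite big1 // => k _; rewrite Arep ?mul0r.
have h2 : forall j', \sum_i (fun i => \sum_k A k i * (xi l0 0 k)%:~R) i * (p i 0 j')%:~R
      + \sum_l (fun l => (\sum_k B k l * (xi l0 0 k)%:~R) - (l == l0)%:R) l * (xi l 0 j')%:~R = 0.
  move=> j' /=; rewrite [X in _ + X](eq_bigr (fun l => (\sum_k B k l * (xi l0 0 k)%:~R) * (xi l 0 j')%:~R
                 - (l == l0)%:R * (xi l 0 j')%:~R)) => [|l _]; last by rewrite mulrBl.
  by rewrite sumrB sum_deltal addrA key subrr.
have [h _] := indepQ _ _ h1 h2.
by rewrite pm big1 // => i _; rewrite h mulr0.
Qed.
End Indep.


Theorem lemma4p3 (R : realType) (d s r : nat)
  (V : 'I_s -> seq 'rV[int]_d) (p : 'I_s -> 'rV[int]_d)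
  (blk : 'I_s -> 'I_r) (rep : 'I_r -> 'I_s) (xi : 'I_(d + r - s) -> 'rV[int]_d) :
  nef_partition R V ->
  (forall i, in_nabla V i (ipt R (p i))) ->
  (forall i, inKdual V (fun l => (l == i)%:R) (ipt R (p i))) ->
  \sum_i p i = 0 ->
  r = (s - \rank (\matrix_(i < s, j < d) ((p i 0 j)%:~R : R)))%N ->
  (forall k, blk (rep k) = k) ->
  (forall k, \sum_(i | blk i == k) p i = 0) ->
  (forall c : 'I_s -> R, (forall i, ~~ nonrep blk rep i -> c i = 0) ->
     \sum_i c i *: ipt R (p i) = 0 -> forall i, c i = 0) ->
  free_part_basis p xi ->
  (exists w : 'I_s -> mbar s d, w_conds p blk rep xi w) /\
  (forall w : 'I_s -> mbar s d, w_conds p blk rep xi w ->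
     direct_decomp p blk rep xi w).
Proof.
move=> _ _ _ _ _ Hrep Hb HR Hfree; split; last first.
  by move=> w Hw; apply: (@decomp _ _ _ _ p blk rep xi w Hrep Hb Hw).
have hc : forall i0 : 'I_s, exists m, (forall j, nonrep blk rep j -> pairQ m (p j) = (j == i0)%:R)
    /\ (forall l, pairQ m (xi l) = 0).
  by move=> i0; exact: (@consQ R _ _ _ _ p blk rep xi Hb HR Hfree (fun j => (j == i0)%:R)).
have [M hM] := fin_all_exists hc.
have hsumblk : forall i k, nonrep blk rep i ->
    \sum_(j' | nonrep blk rep j' && (blk j' == k)) pairQ (M i) (p j') = (blk i == k)%:R.
  move=> i k ni.
  rewrite (eq_bigr (fun j' => (j' == i)%:R)) => [|j' /andP [nj' _]]; last exact: (proj1 (hM i)).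
  have [<-|nk] := eqVneq (blk i) k.
    rewrite (bigD1 i) /= ?ni ?eqxx // big1 ?addr0 // => j' /andP [_ /negbTE ->] //.
  apply: big1 => j' /andP [_ hb]; case: eqP => [ej|] //.
  by rewrite ej (negbTE nk) in hb.
exists (fun i => ((0 : 'rV[int]_s), M i)) => i ni; split.
- move=> n [c [c' [hc0 ->]]]; exists (c i).
  rewrite pairQD2 !pairQ_sum2 [X in _ + X]big1 ?addr0 => [|l _]; last first.
    by rewrite pairQMz2 (proj2 (hM i)) mul0rz.
  rewrite (bigD1 i) //= big1 ?addr0 => [|j nji].
    by rewrite pairQMz2 (proj1 (hM i) i ni) eqxx.
  rewrite pairQMz2; case nj: (nonrep blk rep j).
    by rewrite (proj1 (hM i) j nj) (negbTE nji) mul0rz.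
  by rewrite hc0 ?nj // mulr0z.
- rewrite /pair_et /= !mxE !add0r (proj1 (hM i) i ni) eqxx; split => //.
  by rewrite (@pQ_rep _ _ _ _ _ _ _ _ Hrep Hb) hsumblk // eqxx.
- move=> j nj1 nj2; rewrite /pair_et /= mxE add0r; case nj: (nonrep blk rep j).
    by rewrite (proj1 (hM i) j nj) (negbTE nj2).
  move/negbT: nj; rewrite /nonrep negbK => /eqP ej.
  rewrite -ej (@pQ_rep _ _ _ _ _ _ _ _ Hrep Hb) hsumblk //.
  have -> : (blk i == blk j) = false.
    by apply/negbTE; apply: contra nj1 => /eqP e; rewrite -ej -e.
  by rewrite oppr0.
- by move=> j; rewrite /pair_e /= mxE.
Qed.
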